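(* Let $A$ be a semisimple artinian ring, $A(\mathcal F)$ a flag subalgebra of $A$, and $B$ a subring of $A(\mathcal F)$. Then there exists a flag subalgebra $A'$ of $A$ with $B\subseteq A'\subseteq A(\mathcal F)$ such that $B$ is dense in $A'$.
   Context: A subring $B$ of a ring $A$ is called dense in $A$ if every simple left $A$-module $U$ is also simple as a $B$-$\mathrm{End}_A(U)$-bimodule. Flag subalgebras: if $A=M_n(D)$ with $D$ a division ring, $U=D^n$ its simple module (column vectors, $D$ acting on the right) and $\mathcal F: U=U_0\supset U_1\supset\dots\supset U_s=0$ a flag of $D$-subspaces, then $A(\mathcal F)=\{a\in A: aU_i\subseteq U_i \text{ for all } i\}$ is a flag subalgebra of $A$. If $A=\prod_i A_i$ with $A_i$ simple artinian, a flag subalgebra of $A$ is a subalgebra of the form $\prod_i A_i'$ with each $A_i'$ a flag subalgebra of $A_i$. *)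

(* Defs.v *)
From HB Require Import structures.
From mathcomp Require Import all_boot all_algebra.
Set Implicit Arguments. Unset Strict Implicit. Unset Printing Implicit Defensive.
Import GRing.Theory.
Local Open Scope ring_scope.

Definition division_ring (D : unitRingType) : Prop :=
  forall x : D, x != 0 -> x \is a GRing.unit.

(** Right D-subspaces of the column space U = D^n (D acting on the right:
    u *m c%:M is the column u with every entry multiplied on the right by c). *)
Definition rsubspace (D : pzRingType) (n : nat) (V : 'cV[D]_n -> Prop) : Prop :=
  [/\ V 0,
      (forall u v, V u -> V v -> V (u + v)) &
      (forall u (c : D), V u -> V (u *m (c%:M : 'M[D]_1)))].

Definition fnth (D : pzRingType) (n : nat) (F : seq ('cV[D]_n -> Prop)) j :=
  nth (fun _ => True) F j.

Definition is_flag (D : pzRingType) (n : nat) (F : seq ('cV[D]_n -> Prop)) : Prop :=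
  [/\ (0 < size F)%N,
      (forall j, (j < size F)%N -> rsubspace (fnth F j)),
      (forall v, fnth F 0 v),
      (forall v, fnth F (size F).-1 v -> v = 0) &
      (forall j, (j.+1 < size F)%N -> forall v, fnth F j.+1 v -> fnth F j v)].

Definition flag_stab (D : pzRingType) (n : nat) (F : seq ('cV[D]_n -> Prop))
  (a : 'M[D]_n) : Prop :=
  forall j, (j < size F)%N -> forall v, fnth F j v -> fnth F j (a *m v).

(** The semisimple artinian ring A = prod_{i in I} M_{n_i}(D_i). *)
Definition prodmx (I : finType) (D : I -> pzRingType) (n : I -> nat) : Type :=
  forall i, 'M[D i]_(n i).

Section ProdOps.
Variables (I : finType) (D : I -> pzRingType) (n : I -> nat).
Definition pone : prodmx D n := fun i => 1%:M.
Definition pzero : prodmx D n := fun i => 0.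
Definition padd (a b : prodmx D n) : prodmx D n := fun i => a i + b i.
Definition popp (a : prodmx D n) : prodmx D n := fun i => - a i.
Definition pmul (a b : prodmx D n) : prodmx D n := fun i => a i *m b i.
End ProdOps.

Definition flag_alg (I : finType) (D : I -> pzRingType) (n : I -> nat)
  (F : forall i, seq ('cV[D i]_(n i) -> Prop)) (a : prodmx D n) : Prop :=
  forall i, flag_stab (F i) (a i).

Definition is_flag_subalg (I : finType) (D : I -> pzRingType) (n : I -> nat)
  (S : prodmx D n -> Prop) : Prop :=
  exists F : forall i, seq ('cV[D i]_(n i) -> Prop),
    (forall i, is_flag (F i)) /\ (forall a, S a <-> flag_alg F a).

Definition subring_of (I : finType) (D : I -> pzRingType) (n : I -> nat)
  (B T : prodmx D n -> Prop) : Prop :=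
  [/\ (forall a, B a -> T a), B (pone D n),
      (forall a b, B a -> B b -> B (padd a (popp b))) &
      (forall a b, B a -> B b -> B (pmul a b))].

(** A left S-module structure on M given by act (only its values on S matter). *)
Definition lmod_over (I : finType) (D : I -> pzRingType) (n : I -> nat)
  (S : prodmx D n -> Prop) (M : zmodType) (act : prodmx D n -> M -> M) : Prop :=
  [/\ (forall a x y, S a -> act a (x + y) = act a x + act a y),
      (forall a b x, S a -> S b -> act (padd a b) x = act a x + act b x),
      (forall a b x, S a -> S b -> act (pmul a b) x = act a (act b x)) &
      (forall x, act (pone D n) x = x)].

Definition stable_subgroup (M : zmodType) (ops : (M -> M) -> Prop) (P : M -> Prop) :=
  [/\ P 0, (forall x y, P x -> P y -> P (x + y)), (forall x, P x -> P (- x)) &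
      (forall f, ops f -> forall x, P x -> P (f x))].

Definition simple_for (M : zmodType) (ops : (M -> M) -> Prop) : Prop :=
  (exists x : M, x != 0) /\
  forall P, stable_subgroup ops P -> (forall x, P x -> x = 0) \/ (forall x, P x).

Definition endo_of (I : finType) (D : I -> pzRingType) (n : I -> nat)
  (S : prodmx D n -> Prop) (M : zmodType) (act : prodmx D n -> M -> M) (f : M -> M) :=
  (forall x y, f (x + y) = f x + f y) /\
  (forall a x, S a -> f (act a x) = act a (f x)).

(** B is dense in S: every simple left S-module U is simple as a
    B-End_S(U)-bimodule. *)
Definition dense_in (I : finType) (D : I -> pzRingType) (n : I -> nat)
  (B S : prodmx D n -> Prop) : Prop :=
  forall (M : zmodType) (act : prodmx D n -> M -> M),
    lmod_over S act ->
    simple_for (fun f => exists2 a, S a & f = act a) ->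
    simple_for (fun f => (exists2 b, B b & f = act b) \/ endo_of S act f).

(* Main.v *)
Require Import Defs.
From HB Require Import structures.
From mathcomp Require Import all_boot all_algebra.
From mathcomp Require Import zify.
From Stdlib Require Import Classical ClassicalEpsilon FunctionalExtensionality Lia.
Set Implicit Arguments. Unset Strict Implicit. Unset Printing Implicit Defensive.
Import GRing.Theory.
Local Open Scope ring_scope.


Definition pb (P : Prop) : bool := if excluded_middle_informative P then true else false.
Lemma pbP P : reflect P (pb P).
Proof. by rewrite /pb; case: excluded_middle_informative => h; constructor. Qed.

Section LA.
Variables (D : unitRingType) (hD : division_ring D) (m : nat).
Local Notation V := ('cV[D]_m).

Lemma scE (u : V) (d : D) q : (u *m d%:M) q 0 = u q 0 * d.
Proof. by rewrite !mxE big_ord1 !mxE eqxx mulr1n. Qed.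

Lemma subE (u w : V) q : (u - w) q 0 = u q 0 - w q 0.
Proof. by rewrite !mxE. Qed.

Lemma mulmxN1 (u : V) : u *m (-1)%:M = - u.
Proof. by apply/matrixP=> a b; rewrite ord1 scE mulrN1 !mxE. Qed.

Lemma mulmxsc0 (u : V) : u *m (0 : D)%:M = 0.
Proof. by apply/matrixP=> a b; rewrite ord1 scE mulr0 !mxE. Qed.

Section Sub.
Variable W : V -> Prop.
Hypothesis hW : rsubspace W.
Lemma sub0 : W 0. Proof. by case: hW. Qed.
Lemma subD u v : W u -> W v -> W (u + v). Proof. by case: hW => _ h _; apply: h. Qed.
Lemma subZ u c : W u -> W (u *m c%:M). Proof. by case: hW => _ _ h; apply: h. Qed.
Lemma subN u : W u -> W (- u). Proof. by move=> h; rewrite -mulmxN1; apply: subZ. Qed.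
Lemma subB u v : W u -> W v -> W (u - v). Proof. by move=> *; apply: subD => //; apply: subN. Qed.
Lemma subZV u c : c != 0 -> W (u *m c%:M) -> W u.
Proof.
move=> c0 h; have := subZ (c^-1) h.
by rewrite -mulmxA -scalar_mxM mulrV ?hD // mulmx1.
Qed.
Lemma subsum (I : Type) (r : seq I) (P : pred I) (f : I -> V) :
  (forall i, P i -> W (f i)) -> W (\sum_(i <- r | P i) f i).
Proof. by move=> h; apply: big_ind => //; [exact: sub0 | exact: subD]. Qed.
End Sub.

Definition lead (w : V) (p : 'I_m) :=
  w p 0 != 0 /\ forall q : 'I_m, (q < p)%N -> w q 0 = 0.
Definition pivset (W : V -> Prop) := [set p : 'I_m | pb (exists w, W w /\ lead w p)].
Definition piv W := #|pivset W|.

Lemma pivset_sub (W W' : V -> Prop) : (forall v, W v -> W' v) -> pivset W \subset pivset W'.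
Proof.
move=> h; apply/subsetP=> p; rewrite !inE => /pbP [w [Ww lw]]; apply/pbP.
by exists w; split => //; apply: h.
Qed.

Lemma piv_le (W W' : V -> Prop) : (forall v, W v -> W' v) -> (piv W <= piv W')%N.
Proof. by move=> h; apply: subset_leq_card; apply: pivset_sub. Qed.

Lemma piv_ub W : (piv W <= m)%N.
Proof. by apply: leq_trans (max_card _) _; rewrite card_ord. Qed.

Lemma piv_eq_sub (W W' : V -> Prop) : rsubspace W -> rsubspace W' ->
  (forall v, W v -> W' v) -> (piv W' <= piv W)%N -> forall v, W' v -> W v.
Proof.
move=> hW hW' sub le.
have E : pivset W = pivset W'.
  by apply/eqP; rewrite eqEcard pivset_sub.
suff H : forall k v, W' v -> (forall q : 'I_m, (q < m - k)%N -> v q 0 = 0) -> W v.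
  by move=> v Wv; apply: (H m) => // q; rewrite subnn.
elim=> [|k IH] v Wv hv.
  have -> : v = 0 by apply/matrixP=> a b; rewrite ord1 mxE hv // subn0.
  exact: sub0.
case: (leqP m k) => [mk|km].
  apply: IH => // q; have -> : (m - k = 0)%N by apply/eqP; rewrite subn_eq0.
  by [].
have pm : (m - k.+1 < m)%N by rewrite ltn_subrL; apply/andP; split => //; apply: leq_ltn_trans km.
pose p := Ordinal pm.
have [vp0|vpn] := eqVneq (v p 0) 0.
  apply: IH => // q qlt; case: (ltngtP q p) => [qp|pq|/val_inj qp]; first exact: hv.
    by exfalso; move: qlt pq => /= qlt pq; lia.
  by rewrite qp.
have : p \in pivset W' by rewrite inE; apply/pbP; exists v; split => //; split.
rewrite -E inE => /pbP [w [Ww [wp wq]]].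
pose c := (w p 0)^-1 * v p 0.

have Wv2 : W' (v - w *m c%:M) by exact: (subB hW' Wv (subZ hW' c (sub _ Ww))).
have : W (v - w *m c%:M).
  apply: IH => // q qlt; rewrite subE scE.
  case: (ltngtP q p) => [qp|pq|/val_inj qp].
  - by rewrite hv // wq // mul0r subr0.
  - by exfalso; move: qlt pq => /= qlt pq; lia.
  - by rewrite qp /c mulrA mulrV ?hD // mul1r subrr.
move=> h; have := subD hW h (subZ hW c Ww).
by rewrite subrK.
Qed.

Lemma piv_lt (W W' : V -> Prop) : rsubspace W -> rsubspace W' ->
  (forall v, W v -> W' v) -> (exists v, W' v /\ ~ W v) -> (piv W < piv W')%N.
Proof.
move=> hW hW' sub [v [W'v nWv]]; rewrite ltnNge; apply/negP => le.
by apply: nWv; apply: (piv_eq_sub hW hW' sub le).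
Qed.

Lemma colsum (x : V) : x = \sum_(q < m) delta_mx q 0 *m (x q 0)%:M.
Proof.
apply/matrixP=> a b; rewrite ord1 summxE (bigD1 a) //= big1 => [|q nq].
  by rewrite scE mxE !eqxx mul1r addr0.
by rewrite scE mxE eq_sym (negbTE nq) mul0r.
Qed.

Lemma separate (T : V -> Prop) v : rsubspace T -> ~ T v ->
  exists psi : 'rV[D]_m, (forall t, T t -> psi *m t = 0) /\ psi *m v = 1%:M.
Proof.
move=> hT nTv.
pose P k := pb (exists H : V -> Prop, [/\ rsubspace H, (forall t, T t -> H t), ~ H v & piv H = k]).
have exP : exists k, P k by exists (piv T); apply/pbP; exists T; split.
have ubP : forall k, P k -> (k <= m)%N by move=> k /pbP [H [_ _ _ <-]]; apply: piv_ub.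
case: (ex_maxnP exP ubP) => k /pbP [H [hH TH nHv pk]] maxk.
have span : forall x, exists h c, H h /\ x = h + v *m c%:M.
  move=> x; apply: NNPP => nx.
  pose H' y := exists h d, H h /\ y = h + x *m d%:M.
  have hH' : rsubspace H'.
    split.
    - exists 0, 0; split; [exact: sub0 | by rewrite mulmxsc0 addr0].
    - move=> _ _ [h [d [Hh ->]]] [h' [d' [Hh' ->]]]; exists (h + h'), (d + d'); split.
        exact: subD.
      by rewrite raddfD /= mulmxDr addrACA.
    - move=> _ c [h [d [Hh ->]]]; exists (h *m c%:M), (d * c); split; first exact: subZ.
      by rewrite mulmxDl scalar_mxM mulmxA.
  have le : (piv H' <= k)%N.
    apply: maxk; apply/pbP; exists H'; split => //.
      by move=> t Tt; exists t, 0; split; [exact: TH | by rewrite mulmxsc0 addr0].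
    move=> [h [d [Hh ed]]]; have [d0|dn] := eqVneq d 0.
      by apply: nHv; rewrite ed d0 mulmxsc0 addr0.
    apply: nx; exists ((- h) *m d^-1%:M), d^-1; split; first by apply: (subZ hH); apply: (subN hH).
    have xd : x *m d%:M = v - h by rewrite ed addrC addKr.
    by rewrite -mulmxDl addrC -xd -mulmxA -scalar_mxM mulrV ?hD // mulmx1.
  have : (piv H < piv H')%N.
    apply: piv_lt => //.
      by move=> y Hy; exists y, 0; split => //; rewrite mulmxsc0 addr0.
    exists x; split; first by exists 0, 1; split; [exact: sub0 | rewrite mulmx1 add0r].
    by move=> Hx; apply: nx; exists x, 0; split => //; rewrite mulmxsc0 addr0.
  by rewrite ltnNge pk le.
have hc : forall q : 'I_m, {c : D | H (delta_mx q 0 - v *m c%:M)}.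
  move=> q; apply: constructive_indefinite_description.
  have [h [c [Hh e]]] := span (delta_mx q 0).
  by exists c; rewrite e addrK.
pose psi := \row_q sval (hc q).
have key : forall x, H (x - v *m (psi *m x)).
  move=> x.
  have -> : x - v *m (psi *m x) =
      \sum_(q < m) (delta_mx q 0 - v *m (sval (hc q))%:M) *m (x q 0)%:M.
    rewrite {1 2}(colsum x) (mulmx_sumr psi) mulmx_sumr -sumrB; apply: eq_bigr => q _.
    rewrite mulmxBl (mulmxA psi) -colE.
    rewrite [col q psi]mx11_scalar !mxE -mulmxA.
    done.
  apply: (subsum hH) => q _; apply: (subZ hH); exact: (svalP (hc q)).
exists psi; split.
  move=> t Tt; have := subB hH (TH _ Tt) (key t).
  rewrite opprB addrC subrK (mx11_scalar (psi *m t)) => Hv.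
  have [c0|c0] := eqVneq ((psi *m t) 0 0) 0; first by rewrite c0 raddf0.
  by exfalso; apply: nHv; apply: (subZV hH c0 Hv).
have := key v.
rewrite -{1}[v]mulmx1 (mx11_scalar (psi *m v)) -mulmxBr -raddfB /= => Hv.
have [c0|c0] := eqVneq (1 - (psi *m v) 0 0) 0.
  by move/eqP: c0; rewrite subr_eq0 => /eqP <-.
by exfalso; apply: nHv; apply: (subZV hH c0 Hv).
Qed.

Definition Esum (L : seq (V * 'rV[D]_m)) : 'M[D]_m := \sum_(l <- L) l.1 *m l.2.

Lemma Esum_in (G : V -> Prop) L v : rsubspace G -> (forall l, l \in L -> G l.1) ->
  G (Esum L *m v).
Proof.
move=> hG hL; rewrite /Esum mulmx_suml big_seq; apply: (subsum hG) => l lL.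
by rewrite -mulmxA [l.2 *m v]mx11_scalar; apply: (subZ hG); apply: hL.
Qed.

Lemma Esum_ker (H : V -> Prop) L v : (forall l, l \in L -> forall h, H h -> l.2 *m h = 0) ->
  H v -> Esum L *m v = 0.
Proof.
move=> hL Hv; rewrite /Esum mulmx_suml big_seq big1 // => l lL.
by rewrite -mulmxA hL // mulmx0.
Qed.

Lemma decomp (H G : V -> Prop) : rsubspace H -> rsubspace G -> (forall v, H v -> G v) ->
  exists L : seq (V * 'rV[D]_m),
   [/\ forall l, l \in L -> G l.1, forall l, l \in L -> forall h, H h -> l.2 *m h = 0 &
       forall v, G v -> H (Esum L *m v - v)].
Proof.
move=> hH hG HG.
pose T L v := G v /\ H (Esum L *m v - v).
have hT : forall L, rsubspace (T L).
  move=> L; split.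
  - by split; [exact: sub0 | rewrite mulmx0 subr0; exact: sub0].
  - move=> u w [Gu Hu] [Gw Hw]; split; first exact: subD.
    by rewrite mulmxDr opprD addrACA; apply: subD.
  - move=> u c [Gu Hu]; split; first exact: subZ.
    by rewrite mulmxA -mulmxBl; apply: subZ.
have HT : forall L, (forall l, l \in L -> forall h, H h -> l.2 *m h = 0) ->
    forall v, H v -> T L v.
  move=> L hL v Hv; split; first exact: HG.
  by rewrite (Esum_ker hL Hv) sub0r; apply: subN.
suff IH : forall k L, (forall l, l \in L -> G l.1) ->
    (forall l, l \in L -> forall h, H h -> l.2 *m h = 0) ->
    (m - piv (T L) <= k)%N ->
    exists L', [/\ forall l, l \in L' -> G l.1,
       forall l, l \in L' -> forall h, H h -> l.2 *m h = 0 &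
       forall v, G v -> H (Esum L' *m v - v)].
  by apply: (IH m [::]) => //; rewrite leq_subr.
have step : forall L, (forall l, l \in L -> G l.1) ->
    (forall l, l \in L -> forall h, H h -> l.2 *m h = 0) ->
    (exists L', [/\ forall l, l \in L' -> G l.1,
       forall l, l \in L' -> forall h, H h -> l.2 *m h = 0 &
       forall v, G v -> H (Esum L' *m v - v)]) \/
    exists L', [/\ forall l, l \in L' -> G l.1,
       forall l, l \in L' -> forall h, H h -> l.2 *m h = 0 &
       (piv (T L) < piv (T L'))%N].
  move=> L hL1 hL2.
  case: (classic (forall v, G v -> T L v)) => [all|].
    by left; exists L; split => // v Gv; case: (all v Gv).
  move=> nall; have [v] := not_all_ex_not _ _ nall.
  move=> nv; have := imply_to_and _ _ nv; case=> Gv nTv.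
  have [psi [psiT psiv]] := separate (hT L) nTv.
  right; exists ((v - Esum L *m v, psi) :: L).
  have EL : forall x : V, Esum ((v - Esum L *m v, psi) :: L) *m x =
      (v - Esum L *m v) *m (psi *m x) + Esum L *m x.
    by move=> x; rewrite /Esum big_cons mulmxDl /= mulmxA.
  split.
  - move=> l; rewrite inE => /orP [/eqP -> /=|lL]; last exact: hL1.
    by apply: subB => //; apply: Esum_in.
  - move=> l; rewrite inE => /orP [/eqP -> /= h Hh|lL]; last exact: hL2.
    by apply: psiT; apply: HT.
  - apply: piv_lt => //.
      move=> t [Gt Ht]; split => //; rewrite EL psiT ?mulmx0 ?add0r //.
    exists v; split => //; split => //.
    by rewrite EL psiv mulmx1 subrK subrr; apply: sub0.
elim=> [|k IHk] L hL1 hL2 hk.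
  case: (step L hL1 hL2) => [//|[L' [_ _ lt]]].
  by move: hk; rewrite leqn0 subn_eq0 => /(leq_trans (piv_ub (T L'))); rewrite leqNgt lt.
case: (step L hL1 hL2) => [//|[L' [h1 h2 lt]]].
apply: IHk h1 h2 _.
have := piv_ub (T L'); move: hk lt; lia.
Qed.

End LA.


Section FL.
Variables (D : unitRingType) (hD : division_ring D) (m : nat).
Local Notation V := ('cV[D]_m).
Variable ops : 'M[D]_m -> Prop.

Definition Bst (W : V -> Prop) := forall a, ops a -> forall v, W v -> W (a *m v).

Definition FL (g : nat -> V -> Prop) s :=
  [/\ forall v, g 0%N v, forall v, g s v -> v = 0,
      forall k, (k < s)%N -> forall v, g k.+1 v -> g k v,
      forall k, (k <= s)%N -> rsubspace (g k) &
      forall k, (k <= s)%N -> Bst (g k)].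

Definition Maxl (g : nat -> V -> Prop) s :=
  forall k, (k < s)%N -> forall W, rsubspace W -> Bst W ->
    (forall v, g k.+1 v -> W v) -> (forall v, W v -> g k v) ->
    (forall v, W v -> g k.+1 v) \/ (forall v, g k v -> W v).

Definition stabg (g : nat -> V -> Prop) s (a : 'M[D]_m) :=
  forall k, (k <= s)%N -> forall v, g k v -> g k (a *m v).

Lemma FL_anti g s : FL g s -> forall k k', (k <= k' <= s)%N -> forall v, g k' v -> g k v.
Proof.
case=> _ _ dec _ _ k k' /andP [kk' k's]; elim: k' kk' k's => [|k' IH].
  by rewrite leqn0 => /eqP ->.
rewrite leq_eqVlt => /orP [/eqP -> //|]; rewrite ltnS => kk' k's v gv.
by apply: IH => //; [apply: ltnW | apply: dec].
Qed.

Definition dp (g : nat -> V -> Prop) s :=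
  #|[set x : 'I_m.+1 | [exists k : 'I_s.+1, piv (g k) == x]]|.

Lemma dp_ub g s : (dp g s <= m.+1)%N.
Proof. by apply: leq_trans (max_card _) _; rewrite card_ord. Qed.

Definition ins (g : nat -> V -> Prop) k (W : V -> Prop) t :=
  if (t <= k)%N then g t else if t == k.+1 then W else g t.-1.

Lemma ins_cases g k W t : (ins g k W t = W) \/ (ins g k W t = g (if (t <= k)%N then t else t.-1)).
Proof.
rewrite /ins; case: (leqP t k) => _; first by right.
by case: eqP => _; [left | right].
Qed.

Lemma ins_step g s (hg : FL g s) : ~ Maxl g s ->
  exists k W, [/\ FL (ins g k W) s.+1,
     forall a, stabg (ins g k W) s.+1 a -> stabg g s a &
     (dp g s < dp (ins g k W) s.+1)%N].
Proof.
move=> nmax.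
have [k nk] := not_all_ex_not _ _ nmax.
have [ks nk2] := imply_to_and _ _ nk.
have [W nW] := not_all_ex_not _ _ nk2.
have [hW nW1] := imply_to_and _ _ nW.
have [BW nW'] := imply_to_and _ _ nW1.
have [gW nW''] := imply_to_and _ _ nW'.
have [Wg nor] := imply_to_and _ _ nW''.
have [nWg ngW] := not_or_and _ _ nor.
case: hg => g0 gs dec sub bst.
exists k, W; split.
- split.
  + by move=> v; rewrite /ins leq0n.
  + move=> v; rewrite /ins (_ : (s.+1 <= k)%N = false); last lia.
    by rewrite (_ : (s.+1 == k.+1) = false); [exact: gs | lia].
  + move=> t ts v; rewrite /ins.
    have [tk|tk|tk] := ltngtP t k.
    * by apply: dec; lia.
    * case: eqP => [?|_]; first lia.
      case: eqP => [et|_]; first by rewrite et; apply: gW.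
      have e4 : t = (t.-1).+1 by lia.
      by rewrite /= {1}e4; apply: dec; lia.
    * by subst t; rewrite ?ltnn ?leqnn ?eqxx; exact: Wg.
  + move=> t ts; case: (ins_cases g k W t) => ->; first by [].
    by apply: sub; case: ifP => ?; lia.
  + move=> t ts; case: (ins_cases g k W t) => ->; first by [].
    by apply: bst; case: ifP => ?; lia.
- move=> a st t ts v gv.
  have [tk|tk] := leqP t k.
    have := st t _ v; rewrite /ins tk; apply => //; lia.
  have e1 : (t.+1 <= k)%N = false by lia.
  have e2 : (t.+1 == k.+1) = false by lia.
  have := st t.+1 _ v; rewrite /ins e1 e2 /=.
  by apply => //.
- have ltW1 : (piv (g k.+1) < piv W)%N.
    apply: piv_lt => //; first exact: sub.
    by apply: NNPP => ne; apply: nWg => v Wv; apply: NNPP => ng; apply: ne; exists v.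
  have ltW2 : (piv W < piv (g k))%N.
    apply: piv_lt => //; first by apply: sub; apply: ltnW.
    by apply: NNPP => ne; apply: ngW => v gv; apply: NNPP => ng; apply: ne; exists v.
  have anti := FL_anti (And5 g0 gs dec sub bst).
  apply: proper_card; apply/properP; split.
    apply/subsetP => x; rewrite !inE => /existsP [t /eqP <-].
    have [tk|tk] := leqP t k.
      apply/existsP; exists (inord t); rewrite /ins inordK; last by move: (ltn_ord t); lia.
      by rewrite tk.
    apply/existsP; exists (inord t.+1); rewrite /ins inordK; last by move: (ltn_ord t); lia.
    have e1 : (t.+1 <= k)%N = false by lia.
    have e2 : (t.+1 == k.+1) = false by lia.
    by rewrite e1 e2.
  have pWm : (piv W < m.+1)%N by rewrite ltnS piv_ub.
  exists (Ordinal pWm); rewrite !inE.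
    apply/existsP; exists (inord k.+1); rewrite /ins inordK; last by lia.
    by rewrite ltnn eqxx.
  apply/existsP => [[t /eqP /= e]].
  have [tk|tk] := leqP t k.
    have : (piv (g k) <= piv (g t))%N.
      apply: piv_le => v; apply: anti; move: (ltn_ord t); lia.
    lia.
  have : (piv (g t) <= piv (g k.+1))%N.
    apply: piv_le => v; apply: anti; move: (ltn_ord t); lia.
  lia.
Qed.

Lemma maxflag g s : FL g s ->
  exists g' s', [/\ FL g' s', Maxl g' s' & forall a, stabg g' s' a -> stabg g s a].
Proof.
suff IH : forall t g s, FL g s -> (m.+1 - dp g s <= t)%N ->
  exists g' s', [/\ FL g' s', Maxl g' s' & forall a, stabg g' s' a -> stabg g s a].
  by move=> h; apply: (IH m.+1) => //; rewrite leq_subr.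
elim=> [|t IHt] {}g {}s hg ht.
  case: (classic (Maxl g s)) => [mx|nmx]; first by exists g, s.
  have [k [W [h1 h2 h3]]] := ins_step hg nmx.
  by have := dp_ub (ins g k W) s.+1; move: ht h3; lia.
case: (classic (Maxl g s)) => [mx|nmx]; first by exists g, s.
have [k [W [h1 h2 h3]]] := ins_step hg nmx.
have [g' [s' [f1 f2 f3]]] := IHt _ _ h1 (ltac:(have := dp_ub (ins g k W) s.+1; move: ht h3; lia)).
by exists g', s'; split => // a /f3 /h2.
Qed.

End FL.


Section Dense.
Variables (I : finType) (D : I -> unitRingType) (n : I -> nat).
Hypothesis hD : forall i, division_ring (D i).
Variables (g : forall i, nat -> 'cV[D i]_(n i) -> Prop) (s : I -> nat).
Variable B : prodmx D n -> Prop.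
Definition opsB (i : I) (a : 'M[D i]_(n i)) := exists2 b, B b & a = b i.
Arguments g : clear implicits.
Hypothesis hFL : forall i : I, FL (opsB (i:=i)) (g i) (s i).
Hypothesis hmax : forall i, Maxl (@opsB i) (g i) (s i).
Definition Ap (a : prodmx D n) := forall i, stabg (g i) (s i) (a i).
Hypothesis hBA : forall b, B b -> Ap b.

Definition emb i (a : 'M[D i]_(n i)) : prodmx D n := fun i' =>
  match @eqP _ i i' with
  | ReflectT e => eq_rect i (fun k => 'M[D k]_(n k)) a i' e
  | ReflectF _ => 0
  end.

Lemma emb_eq i (a : 'M[D i]_(n i)) : emb a i = a.
Proof.
rewrite /emb; case: eqP => // e.
by rewrite (eq_irrelevance e (erefl i)).
Qed.

Lemma emb_neq i i' (a : 'M[D i]_(n i)) : i != i' -> emb a i' = 0.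
Proof. by rewrite /emb; case: eqP. Qed.

Lemma sub_g i k : (k <= s i)%N -> rsubspace (g i k).
Proof. by case: (hFL i) => _ _ _ h _; apply: h. Qed.

Lemma anti_g i k k' v : (k <= k' <= s i)%N -> g i k' v -> g i k v.
Proof. by move=> h; apply: (FL_anti (hFL i)). Qed.

Lemma gs0 i v : g i (s i) v -> v = 0.
Proof. by case: (hFL i) => _ h _ _ _; apply: h. Qed.

Lemma g0all i v : g i 0%N v.
Proof. by case: (hFL i) => h _ _ _ _; apply: h. Qed.

Lemma stab0 i : stabg (g i) (s i) 0.
Proof. by move=> k ks v _; rewrite mul0mx; apply: sub0; apply: sub_g. Qed.

Lemma stab1 i : stabg (g i) (s i) 1%:M.
Proof. by move=> k ks v gv; rewrite mul1mx. Qed.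

Lemma stabD i a b : stabg (g i) (s i) a -> stabg (g i) (s i) b -> stabg (g i) (s i) (a + b).
Proof. by move=> ha hb k ks v gv; rewrite mulmxDl; apply: subD; [apply: sub_g|apply: ha|apply: hb]. Qed.

Lemma stabN i a : stabg (g i) (s i) a -> stabg (g i) (s i) (- a).
Proof. by move=> ha k ks v gv; rewrite mulNmx; apply: subN; [apply: sub_g|apply: ha]. Qed.

Lemma stabM i a b : stabg (g i) (s i) a -> stabg (g i) (s i) b -> stabg (g i) (s i) (a *m b).
Proof. by move=> ha hb k ks v gv; rewrite -mulmxA; apply: ha => //; apply: hb. Qed.

Lemma stabsum i (T : Type) (r : seq T) (P : pred T) (f : T -> 'M[D i]_(n i)) :
  (forall t, P t -> stabg (g i) (s i) (f t)) -> stabg (g i) (s i) (\sum_(t <- r | P t) f t).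
Proof. by move=> h; apply: big_ind => //; [exact: stab0 | exact: stabD]. Qed.

Lemma Ap0 : Ap (pzero D n). Proof. by move=> i; apply: stab0. Qed.
Lemma Ap1 : Ap (pone D n). Proof. by move=> i; apply: stab1. Qed.
Lemma ApD a b : Ap a -> Ap b -> Ap (padd a b). Proof. by move=> ha hb i; apply: stabD. Qed.
Lemma ApN a : Ap a -> Ap (popp a). Proof. by move=> ha i; apply: stabN. Qed.
Lemma ApM a b : Ap a -> Ap b -> Ap (pmul a b). Proof. by move=> ha hb i; apply: stabM. Qed.
Lemma Ap_emb i (a : 'M[D i]_(n i)) : stabg (g i) (s i) a -> Ap (emb a).
Proof.
move=> ha i'; case: (eqVneq i i') => [<-|ne]; first by rewrite emb_eq.
by rewrite emb_neq //; apply: stab0.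
Qed.

Lemma embD i (a b : 'M[D i]_(n i)) : emb (a + b) = padd (emb a) (emb b).
Proof.
apply: functional_extensionality_dep => i'; rewrite /padd.
case: (eqVneq i i') => [<-|ne]; first by rewrite !emb_eq.
by rewrite !emb_neq // addr0.
Qed.

Lemma emb0 i : emb (0 : 'M[D i]_(n i)) = pzero D n.
Proof.
apply: functional_extensionality_dep => i'; rewrite /pzero.
by case: (eqVneq i i') => [<-|ne]; [rewrite emb_eq | rewrite emb_neq].
Qed.

Lemma embMl i (c : prodmx D n) (a : 'M[D i]_(n i)) : pmul c (emb a) = emb (c i *m a).
Proof.
apply: functional_extensionality_dep => i'; rewrite /pmul.
case: (eqVneq i i') => [<-|ne]; first by rewrite !emb_eq.
by rewrite !emb_neq // mulmx0.
Qed.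

Lemma embMr i (c : prodmx D n) (a : 'M[D i]_(n i)) : pmul (emb a) c = emb (a *m c i).
Proof.
apply: functional_extensionality_dep => i'; rewrite /pmul.
case: (eqVneq i i') => [<-|ne]; first by rewrite !emb_eq.
by rewrite !emb_neq // mul0mx.
Qed.

Definition lvl i j (u : 'cV[D i]_(n i)) (psi : 'rV[D i]_(n i)) :=
  [/\ (j < s i)%N, g i j u & forall h, g i j.+1 h -> psi *m h = 0].
Arguments lvl : clear implicits.

Lemma stab_lvl i j u psi : lvl i j u psi -> stabg (g i) (s i) (u *m psi).
Proof.
case=> js gu hpsi k ks v gv; rewrite -mulmxA.
have [kj|jk] := leqP k j.
  rewrite [psi *m v]mx11_scalar; apply: (subZ (sub_g ks)).
  by apply: (anti_g (k' := j)) => //; apply/andP; split => //; apply: ltnW.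
rewrite hpsi ?mulmx0; first by apply: sub0; apply: sub_g.
by apply: (anti_g (k' := k)) => //; apply/andP; split.
Qed.

Definition Nil (a : prodmx D n) :=
  Ap a /\ forall i k, (k < s i)%N -> forall v, g i k v -> g i k.+1 (a i *m v).

Lemma Nil_lvl i j u psi : lvl i j u psi -> g i j.+1 u -> Nil (emb (u *m psi)).
Proof.
move=> hl gu; split; first by apply: Ap_emb; exact: (stab_lvl hl).
move=> i' k ks v gv; case: (eqVneq i i') => [ei|ne]; last first.
  by rewrite emb_neq // mul0mx; apply: sub0; apply: sub_g.
subst i'; rewrite emb_eq; case: hl => js _ hpsi; rewrite -mulmxA.
have [kj|jk] := leqP k j.
  rewrite [psi *m v]mx11_scalar; apply: (subZ (sub_g ks)).
  by apply: (anti_g (k' := j.+1)) => //; apply/andP; split.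
rewrite hpsi ?mulmx0; first by apply: sub0; apply: sub_g.
by apply: (anti_g (k' := k)) => //; apply/andP; split; last apply: ltnW.
Qed.

Section Module.
Variables (M : zmodType) (act : prodmx D n -> M -> M).
Hypothesis hlm : lmod_over Ap act.
Hypothesis hsimp : simple_for (fun f => exists2 a, Ap a & f = act a).

Lemma actD a x y : Ap a -> act a (x + y) = act a x + act a y.
Proof. by case: hlm => h _ _ _; apply: h. Qed.
Lemma actpD a b x : Ap a -> Ap b -> act (padd a b) x = act a x + act b x.
Proof. by case: hlm => _ h _ _; apply: h. Qed.
Lemma actpM a b x : Ap a -> Ap b -> act (pmul a b) x = act a (act b x).
Proof. by case: hlm => _ _ h _; apply: h. Qed.
Lemma act1 x : act (pone D n) x = x.
Proof. by case: hlm => _ _ _ h; apply: h. Qed.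
Lemma act0r a : Ap a -> act a 0 = 0.
Proof.
move=> ha; have h := actD 0 0 ha; rewrite addr0 in h.
by apply: (@addrI _ (act a 0)); rewrite addr0 -h.
Qed.
Lemma actNr a x : Ap a -> act a (- x) = - act a x.
Proof.
move=> ha; apply/eqP; rewrite -subr_eq0 opprK -actD // addNr act0r //.
Qed.
Lemma actpzero x : act (pzero D n) x = 0.
Proof.
have e : padd (pzero D n) (pzero D n) = pzero D n.
  by apply: functional_extensionality_dep => i; rewrite /padd /pzero addr0.
have h := actpD x Ap0 Ap0; rewrite e in h.
by apply: (@addrI _ (act (pzero D n) x)); rewrite addr0 -h.
Qed.

Lemma nonzeroM : exists x : M, x != 0.
Proof. by case: hsimp. Qed.

Lemma simpleA (P : M -> Prop) :
  P 0 -> (forall x y, P x -> P y -> P (x + y)) -> (forall x, P x -> P (- x)) ->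
  (forall a x, Ap a -> P x -> P (act a x)) -> (exists2 x, P x & x != 0) -> forall x, P x.
Proof.
move=> P0 PD PN Pa [x Px nx].
case: hsimp => _ /(_ P) [].
- by split => // f [a ha ->] y Py; apply: Pa.
- by move=> h; move: nx; rewrite (h x Px) eqxx.
- done.
Qed.

Fixpoint allp (P : prodmx D n -> Prop) (l : seq (prodmx D n)) :=
  if l is a :: l' then P a /\ allp P l' else True.

Definition prodl (l : seq (prodmx D n)) := foldr (@pmul I D n) (pone D n) l.

Lemma Ap_prodl l : allp Ap l -> Ap (prodl l).
Proof.
elim: l => [|a l IH] /=; first by move=> _; exact: Ap1.
by case=> ha hl; apply: ApM => //; apply: IH.
Qed.

Lemma allp_Nil_Ap l : allp Nil l -> allp Ap l.
Proof. by elim: l => //= a l IH [[ha _] hl]; split => //; apply: IH. Qed.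

Definition Sbound := \sum_(i : I) s i.

Lemma prodl_lower l : allp Nil l -> forall i k, (k <= s i)%N ->
  forall v, g i k v -> g i (minn (k + size l) (s i)) (prodl l i *m v).
Proof.
elim: l => [|a l IH] h i k ks v gv /=.
  by rewrite /pone mul1mx addn0; rewrite (minn_idPl ks).
case: h => [[Apa Nla] hl].
have := IH hl i k ks v gv; rewrite /pmul -mulmxA.
set w := prodl l i *m v => gw.
have [lt|ge] := ltnP (k + size l) (s i).
  move: gw; rewrite (minn_idPl (ltnW lt)) => gw.
  have -> : minn (k + (size l).+1) (s i) = (k + size l).+1 by rewrite addnS; apply/minn_idPl.
  by apply: Nla.
move: gw; rewrite (minn_idPr ge) => gw.
have -> : minn (k + (size l).+1) (s i) = s i by apply/minn_idPr; rewrite addnS; apply: leqW.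
by apply: (Apa i) => //.
Qed.

Lemma s_le_S i : (s i <= Sbound)%N.
Proof. by rewrite /Sbound (bigD1 i) //= leq_addr. Qed.

Lemma prodl_zero l : allp Nil l -> (Sbound <= size l)%N -> prodl l = pzero D n.
Proof.
move=> h hs; apply: functional_extensionality_dep => i; rewrite /pzero.
apply/matrixP => p q.
have := prodl_lower h (leq0n (s i)) (g0all (delta_mx q 0)).
rewrite add0n (minn_idPr (leq_trans (s_le_S i) hs)) => /gs0.
rewrite -colE => /matrixP /(_ p 0); rewrite !mxE => ->.
done.
Qed.

Lemma Nil_kills a x : Nil a -> act a x = 0.
Proof.
pose Z (x : M) := forall a, Nil a -> act a x = 0.
suff ZA : forall x, Z x by move=> Na; apply: ZA.
have NilM : forall a c, Nil a -> Ap c -> Nil (pmul a c).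
  move=> a' c [Aa Na] Ac; split; first exact: ApM.
  by move=> i k ks v gv; rewrite /pmul -mulmxA; apply: Na => //; apply: (Ac i) => //; apply: ltnW.
apply: simpleA.
- by move=> b [Ab _]; apply: act0r.
- move=> y z Zy Zz b Nb; have [Ab _] := Nb.
  by rewrite actD // Zy // Zz // addr0.
- move=> y Zy b Nb; have [Ab _] := Nb.
  by rewrite actNr // Zy // oppr0.
- move=> c y Ac Zy b Nb; have [Ab _] := Nb.
  by rewrite -actpM //; apply: Zy; apply: NilM.
have [x0 nx0] := nonzeroM.
pose P t := pb (exists l, [/\ size l = t, allp Nil l & act (prodl l) x0 != 0]).
have exP : exists t, P t by exists 0%N; apply/pbP; exists [::]; split => //=; rewrite act1.
have ubP : forall t, P t -> (t <= Sbound)%N.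
  move=> t /pbP [l [sl hl nz]]; rewrite leqNgt; apply/negP => lt.
  by move: nz; rewrite prodl_zero ?actpzero ?eqxx // sl ltnW.
case: (ex_maxnP exP ubP) => t /pbP [l [sl hl nz]] maxt.
exists (act (prodl l) x0) => // b Nb.
apply/eqP; apply: contraT => nz2.
have : P t.+1.
  apply/pbP; exists (b :: l); split; first by rewrite /= sl.
    by split.
  change (act (pmul b (prodl l)) x0 != 0).
  rewrite actpM //; first by case: Nb.
  by apply: Ap_prodl; apply: allp_Nil_Ap.
by move/maxt; rewrite ltnn.
Qed.

Lemma dec_g i k v : (k < s i)%N -> g i k.+1 v -> g i k v.
Proof. by case: (hFL i) => _ _ h _ _; move=> ks; exact: h. Qed.

Lemma exists_lvl : exists i j u psi x, lvl i j u psi /\ act (emb (u *m psi)) x != 0.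
Proof.
apply: NNPP => H0.
have Hz : forall i j u psi x, lvl i j u psi -> act (emb (u *m psi)) x = 0.
  move=> i j u psi x hl; apply/eqP; apply: contraT => nz; exfalso; apply: H0.
  by exists i, j, u, psi, x.
have hL : forall i j, exists L : seq ('cV[D i]_(n i) * 'rV[D i]_(n i)), (j < s i)%N ->
    [/\ forall l, l \in L -> g i j l.1,
        forall l, l \in L -> forall h, g i j.+1 h -> l.2 *m h = 0 &
        forall v, g i j v -> g i j.+1 (Esum L *m v - v)].
  move=> i j; case: (ltnP j (s i)) => js; last by exists [::].
  have [L hL] := decomp (@hD i) (sub_g js) (sub_g (ltnW js)) (fun v => dec_g js).
  by exists L.
pose LL i j := sval (constructive_indefinite_description _ (hL i j)).
have hLL : forall i j, (j < s i)%N -> _ := fun i j => svalP (constructive_indefinite_description _ (hL i j)).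
pose E i := \sum_(j < s i) Esum (LL i j).
pose K a := Ap a /\ forall x, act a x = 0.
have K0 : K (pzero D n) by split; [exact: Ap0 | exact: actpzero].
have KD : forall a b, K a -> K b -> K (padd a b).
  by move=> a b [Aa Ka] [Ab Kb]; split; [exact: ApD | move=> x; rewrite actpD // Ka Kb addr0].
have KE : forall i, stabg (g i) (s i) (E i) /\ K (emb (E i)).
  move=> i; apply: (big_ind (fun A => stabg (g i) (s i) A /\ K (emb A))).
  - by split; [exact: stab0 | rewrite emb0].
  - by move=> a b [sa Ka] [sb Kb]; split; [exact: stabD | rewrite embD; apply: KD].
  move=> j _; have [h1 h2 _] := hLL i j (ltn_ord j).
  rewrite /Esum big_seq; apply: (big_ind (fun A => stabg (g i) (s i) A /\ K (emb A))).
  - by split; [exact: stab0 | rewrite emb0].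
  - by move=> a b [sa Ka] [sb Kb]; split; [exact: stabD | rewrite embD; apply: KD].
  move=> l lL.
  have hl : lvl i j l.1 l.2 by split; [exact: ltn_ord | exact: h1 | exact: h2].
  split; first exact: (stab_lvl hl).
  by split; [apply: Ap_emb; exact: (stab_lvl hl) | move=> x; apply: (Hz _ _ _ _ _ hl)].
pose pe (l : seq I) : prodmx D n := fun i => if i \in l then E i else 0.
have Kpe : forall l, uniq l -> K (pe l).
  elim=> [|i l IH] /=.
    by move=> _; have -> : pe [::] = pzero D n by apply: functional_extensionality_dep.
  case/andP => nil ul.
  have -> : pe (i :: l) = padd (emb (E i)) (pe l).
    apply: functional_extensionality_dep => i'; rewrite /padd /pe inE.
    case: (eqVneq i i') => [<-|ne].
      by rewrite emb_eq ?eqxx /= (negbTE nil) addr0.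
    rewrite emb_neq // add0r; case: (i' \in l) => //; by rewrite ?orbF ?orbT.
  by apply: KD; [case: (KE i) | apply: IH].
have KeE : K (fun i => E i).
  have -> : (fun i => E i) = pe (enum I).
    by apply: functional_extensionality_dep => i; rewrite /pe mem_enum.
  by apply: Kpe; apply: enum_uniq.
have Nnn : Nil (fun i => 1%:M - E i).
  split.
    by move=> i; apply: stabD; [exact: stab1 | apply: stabN; case: (KE i)].
  move=> i k ks v gv; rewrite mulmxBl mul1mx /E mulmx_suml (bigD1 (Ordinal ks)) //=.
  have [_ _ h3] := hLL i k ks.
  have hsub := sub_g ks.
  have sk1 : rsubspace (g i k.+1) by apply: sub_g.
  set a := Esum _ *m v; set R := \sum_(_ < _ | _) _.
  have -> : v - (a + R) = - (a - v) - R by rewrite opprD addrA opprB.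
  apply: (subB sk1); first by apply: (subN sk1); apply: h3.
  apply: (subsum sk1) => j nj.
  have [h1 h2 _] := hLL i j (ltn_ord j).
  have [jk|kj] := ltnP j k.
    rewrite (Esum_ker h2); first exact: sub0.
    by apply: (anti_g (k' := k)) => //; apply/andP; split; last exact: ltnW.
  have kj' : (k < j)%N.
    by rewrite ltn_neqAle kj andbT; apply: contra nj => /eqP e; apply/eqP/val_inj.
  apply: (anti_g (k' := j)); first by apply/andP; split; last exact: ltnW.
  by apply: Esum_in; [apply: sub_g; exact: ltnW | exact: h1].
have [x0 nx0] := nonzeroM.
have : pone D n = padd (fun i => E i) (fun i => 1%:M - E i).
  by apply: functional_extensionality_dep => i; rewrite /pone /padd addrC subrK.
move=> e; move: nx0; rewrite -(act1 x0) e actpD.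
- by case: KeE => _ ->; rewrite (Nil_kills _ Nnn) addr0 eqxx.
- by case: KeE.
- by case: Nnn.
Qed.

Lemma dense_final (P : M -> Prop) :
  stable_subgroup (fun f => (exists2 b, B b & f = act b) \/ endo_of Ap act f) P ->
  (forall x, P x -> x = 0) \/ (forall x, P x).
Proof.
case=> P0 PD PN Pops.
case: (classic (exists p, P p /\ p != 0)) => [[p [Pp np]]|none]; last first.
  left=> x Px; apply/eqP; apply: contraT => nx; exfalso; apply: none; by exists x.
right.
have [i [j [u0 [psi0 [x0 [hl nz]]]]]] := exists_lvl.
case: hl => js gu0 hpsi0.
have sj : rsubspace (g i j) by apply: sub_g; apply: ltnW.
have sj1 : rsubspace (g i j.+1) by apply: sub_g.
have Aplvl : forall u phi, g i j u -> (forall h, g i j.+1 h -> phi *m h = 0) ->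
    Ap (emb (u *m phi)).
  by move=> u phi gu hphi; apply: Ap_emb; apply: (@stab_lvl i j); split.
pose Th (u : 'cV[D i]_(n i)) := act (emb (u *m psi0)) x0.
have ApTh : forall u, g i j u -> Ap (emb (u *m psi0)) by move=> u gu; apply: Aplvl.
have ThD : forall u w, g i j u -> g i j w -> Th (u + w) = Th u + Th w.
  by move=> u w gu gw; rewrite /Th mulmxDl embD actpD //; apply: ApTh.
have Th0 : Th 0 = 0 by rewrite /Th mul0mx emb0 actpzero.
have ThN : forall u, g i j u -> Th (- u) = - Th u.
  move=> u gu; apply/eqP; rewrite -subr_eq0 opprK -ThD ?addNr ?Th0 //.
  exact: subN.
have ThB : forall u w, g i j u -> g i j w -> Th (u - w) = Th u - Th w.
  by move=> u w gu gw; rewrite ThD ?ThN //; apply: subN.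
have stabj : forall c, Ap c -> forall u, g i j u -> g i j (c i *m u).
  by move=> c Ac u gu; apply: (Ac i) => //; apply: ltnW.
have Th_eq : forall c u, Ap c -> g i j u -> act c (Th u) = Th (c i *m u).
  by move=> c u Ac gu; rewrite /Th -actpM ?embMl ?mulmxA //; apply: ApTh.
have Th_low : forall u, g i j.+1 u -> Th u = 0.
  move=> u gu; apply: Nil_kills; apply: (@Nil_lvl i j) => //.
  by split => //; apply: dec_g.
have Thsurj : forall x, exists u, g i j u /\ Th u = x.
  apply: simpleA.
  - by exists 0; split; [exact: sub0 | exact: Th0].
  - move=> _ _ [u [gu <-]] [w [gw <-]]; exists (u + w); split; first exact: subD.
    exact: ThD.
  - by move=> _ [u [gu <-]]; exists (- u); split; [exact: subN | exact: ThN].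
  - move=> c _ Ac [u [gu <-]]; exists (c i *m u); split; first exact: stabj.
    by rewrite Th_eq.
  - by exists (Th u0) => //; exists u0.
have Th_ker : forall u, g i j u -> Th u = 0 -> g i j.+1 u.
  move=> u gu Thu; apply: NNPP => ng.
  have [psi [hpsi psiu]] := separate (@hD i) sj1 ng.
  have key : Th u0 = 0.
    have e := Th_eq (emb (u0 *m psi)) u (Aplvl _ _ gu0 hpsi) gu.
    rewrite emb_eq -mulmxA psiu mulmx1 in e.
    by rewrite -e Thu act0r //; apply: Aplvl.
  by move: nz; rewrite -/(Th u0) key eqxx.
pose pre x := sval (constructive_indefinite_description _ (Thsurj x)).
have preP : forall x, g i j (pre x) /\ Th (pre x) = x.
  move=> x; exact: (svalP (constructive_indefinite_description _ (Thsurj x))).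
have Th_congr : forall u w (d : D i), g i j u -> g i j w -> Th u = Th w ->
    Th (u *m d%:M) = Th (w *m d%:M).
  move=> u w d gu gw e; apply/eqP; rewrite -subr_eq0 -ThB; try by apply: subZ.
  rewrite -mulmxBl Th_low //; apply: subZ => //; apply: Th_ker; first exact: subB.
  by rewrite ThB // e subrr.
pose rho (d : D i) x := Th (pre x *m d%:M).
have rhoE : forall d, endo_of Ap act (rho d).
  move=> d; split.
    move=> x y; have [gx ex] := preP x; have [gy ey] := preP y.
    have [gxy exy] := preP (x + y).
    have e : Th (pre x *m d%:M) + Th (pre y *m d%:M) = Th ((pre x + pre y) *m d%:M).
      by rewrite mulmxDl ThD //; apply: subZ.
    rewrite /rho e; apply: Th_congr => //; first exact: subD.
    by rewrite exy ThD // ex ey.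
  move=> a x Aa; rewrite /rho.
  have [gx ex] := preP x.
  have [gax eax] := preP (act a x).
  rewrite Th_eq //; last by apply: subZ.
  rewrite mulmxA; apply: Th_congr => //; first exact: stabj.
  by rewrite eax -Th_eq // ex.
pose SP u := g i j u /\ forall (phi : 'rV[D i]_(n i)) x,
    (forall h, g i j.+1 h -> phi *m h = 0) -> P (act (emb (u *m phi)) x).
have hSP : rsubspace SP.
  split.
  - split; first exact: sub0.
    by move=> phi x _; rewrite mul0mx emb0 actpzero.
  - move=> u w [gu Pu] [gw Pw]; split; first exact: subD.
    move=> phi x hphi; rewrite mulmxDl embD actpD; try by apply: Aplvl.
    by apply: PD; [apply: Pu | apply: Pw].
  - move=> u c [gu Pu]; split; first exact: subZ.
    move=> phi x hphi; rewrite -mulmxA; apply: Pu => h gh.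
    by rewrite -mulmxA hphi // mulmx0.
have BSP : Bst (@opsB i) SP.
  move=> a [b Bb ->] u [gu Pu]; split; first exact: (stabj b (hBA Bb) u gu).
  move=> phi x hphi; rewrite -mulmxA -embMl actpM; last first.
  - by apply: Aplvl.
  - exact: (hBA Bb).
  by apply: Pops; [left; exists b | apply: Pu].
have lowSP : forall u, g i j.+1 u -> SP u.
  move=> u gu; split; first by apply: dec_g.
  move=> phi x hphi; rewrite Nil_kills //; apply: (@Nil_lvl i j) => //.
  by split => //; apply: dec_g.
have [gp ep] := preP p.
have ngp : ~ g i j.+1 (pre p).
  by move=> h; move: np; rewrite -ep Th_low // eqxx.
have SPp : SP (pre p).
  split => // phi x hphi.
  have [gx ex] := preP x.
  rewrite -ex /Th -actpM; first last.
  - by apply: ApTh.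
  - by apply: Aplvl.
  rewrite embMr emb_eq !mulmxA -(mulmxA (pre p)) [phi *m pre x]mx11_scalar.
  change (P (rho ((phi *m pre x) 0 0) p)).
  by apply: Pops => //; right; apply: rhoE.
case: (@hmax i j js SP hSP BSP lowSP (fun v h => proj1 h)) => [sub|sup].
  by exfalso; apply: ngp; apply: sub.
move=> x; have [gx <-] := preP x.
by case: (sup _ gx) => _; apply; [].
Qed.

End Module.

Lemma dense_Ap : dense_in B Ap.
Proof.
move=> M act hlm hsimp; split; first by case: hsimp.
by move=> P hP; exact: (dense_final hlm hsimp hP).
Qed.

End Dense.


Unset Implicit Arguments.

Theorem lemma1p5 (I : finType) (D : I -> unitRingType) (n : I -> nat)
  (hD : forall i, division_ring (D i)) (hn : forall i, (0 < n i)%N)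
  (F : forall i, seq ('cV[D i]_(n i) -> Prop)) (hF : forall i, is_flag (F i))
  (B : prodmx D n -> Prop) (hB : subring_of B (flag_alg F)) :
  exists A' : prodmx D n -> Prop,
    [/\ is_flag_subalg A',
        (forall a, B a -> A' a),
        (forall a, A' a -> flag_alg F a) &
        dense_in B A'].
Proof.
have hsel : forall i, exists p : (nat -> 'cV[D i]_(n i) -> Prop) * nat,
   [/\ FL (opsB (D:=D) B (i:=i)) p.1 p.2, Maxl (opsB (D:=D) B (i:=i)) p.1 p.2 &
       forall a, stabg p.1 p.2 a -> flag_stab (F i) a].
  move=> i.
  have fl0 : FL (opsB (D:=D) B (i:=i)) (fnth (F i)) (size (F i)).-1.
    case: (hF i) => sz sub f0 flast fdec; case: hB => BA _ _ _.
    split.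
    - exact: f0.
    - exact: flast.
    - by move=> k ks v; apply: fdec; rewrite -(prednK sz) ltnS.
    - by move=> k ks; apply: sub; rewrite -(prednK sz) ltnS.
    - move=> k ks a [b Bb ->] v hv; apply: (BA b Bb i k _ v hv).
      by rewrite -(prednK sz) ltnS.
  have [g' [s' [h1 h2 h3]]] := maxflag (@hD i) fl0.
  exists (g', s'); split => // a /h3 st j js v hv; apply: st => //.
  by case: (hF i) => szF _ _ _ _; rewrite -ltnS (prednK szF).
pose gg i := (sval (constructive_indefinite_description _ (hsel i))).1.
pose ss i := (sval (constructive_indefinite_description _ (hsel i))).2.
have hgg : forall i, [/\ FL (opsB (D:=D) B (i:=i)) (gg i) (ss i),
    Maxl (opsB (D:=D) B (i:=i)) (gg i) (ss i) &
    forall a, stabg (gg i) (ss i) a -> flag_stab (F i) a].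
  by move=> i; exact: (svalP (constructive_indefinite_description _ (hsel i))).
pose F' i := mkseq (gg i) (ss i).+1.
have fn : forall i k, (k <= ss i)%N -> fnth (F' i) k = gg i k.
  by move=> i k ks; rewrite /fnth /F' nth_mkseq.
have sz : forall i, size (F' i) = (ss i).+1 by move=> i; rewrite size_mkseq.
have stabE : forall i a, flag_stab (F' i) a <-> stabg (gg i) (ss i) a.
  move=> i a; split => h k ks v.
    by rewrite -fn //; apply: h; rewrite sz.
  by move: ks; rewrite sz => ks; rewrite fn //; apply: h.
have hBA : forall b, B b -> Ap gg ss b.
  move=> b Bb i k ks v hv; case: (hgg i) => [[_ _ _ _ bst] _ _].
  by apply: (bst k ks); [exists b|].
exists (Ap gg ss); split.
- exists F'; split.
    move=> i; case: (hgg i) => [[g0 gs dec sub bst] _ _]; split.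
    + by rewrite sz.
    + by move=> j; rewrite sz => js; rewrite fn //; apply: sub.
    + by move=> v; rewrite fn.
    + by move=> v; rewrite sz /= fn //; apply: gs.
    + move=> j; rewrite sz => js v; rewrite !fn //; last exact: ltnW.
      by apply: dec.
  by move=> a; split => h i; apply/stabE; apply: h.
- exact: hBA.
- by move=> a h i; case: (hgg i) => _ _ h3; apply: h3; apply: h.
- apply: dense_Ap => // i; by case: (hgg i).
Qed.
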